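(* Let $\varphi:\Lambda\to\Gamma$ be a regular covering map of finite simplicial graphs, and let $u,u'$ be vertices of $\Lambda$ with $\mathrm{lk}(u)\subseteq\mathrm{st}(u')$ and $\varphi(u)=\varphi(u')$. If $u$ is not an isolated vertex, then $u=u'$. Otherwise, $u'$ is also an isolated vertex.
   Context: Graphs are finite simplicial graphs; $\mathrm{lk}(u)$ is the subgraph induced by the neighbours of $u$ and $\mathrm{st}(u)$ the subgraph induced by $\mathrm{lk}(u)\cup\{u\}$. A covering map $\varphi:\Lambda\to\Gamma$ is a surjective simplicial map mapping the neighbours of each vertex $u$ bijectively onto the neighbours of $\varphi(u)$; regular means the group of graph automorphisms $\mu$ of $\Lambda$ with $\varphi\mu=\varphi$ acts transitively on each fiber. *)

(* Defs.v *)
From mathcomp Require Import all_boot all_fingroup.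
Set Implicit Arguments. Unset Strict Implicit. Unset Printing Implicit Defensive.

Definition simple_graph (T : finType) (e : rel T) : Prop :=
  symmetric e /\ irreflexive e.

(* Neighbours of u, i.e. the vertex set of lk(u). *)
Definition nbhd (T : finType) (e : rel T) (u : T) : {set T} := [set v | e u v].

Definition star (T : finType) (e : rel T) (u : T) : {set T} := u |: nbhd e u.

Definition isolated (T : finType) (e : rel T) (u : T) : Prop :=
  nbhd e u = set0.

Definition covering_map (TL TG : finType) (eL : rel TL) (eG : rel TG)
  (phi : TL -> TG) : Prop :=
  [/\ forall y : TG, exists x : TL, phi x = y,
      forall a b, eL a b -> eG (phi a) (phi b),
      forall u, {in nbhd eL u &, injective phi}
    & forall u, phi @: nbhd eL u = nbhd eG (phi u)].

Definition deck (TL TG : finType) (eL : rel TL) (phi : TL -> TG)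
  (mu : {perm TL}) : Prop :=
  (forall a b, eL (mu a) (mu b) = eL a b) /\ (forall a, phi (mu a) = phi a).

Definition regular_covering (TL TG : finType) (eL : rel TL) (eG : rel TG)
  (phi : TL -> TG) : Prop :=
  covering_map eL eG phi /\
  forall x y, phi x = phi y -> exists mu : {perm TL}, deck eL phi mu /\ mu x = y.

(* Main.v *)
Require Import Defs.
From mathcomp Require Import all_boot all_fingroup.

Theorem lemma3p2 (TL TG : finType) (eL : rel TL) (eG : rel TG)
  (phi : TL -> TG) (u u' : TL) :
  simple_graph eL -> simple_graph eG ->
  regular_covering eL eG phi ->
  nbhd eL u \subset star eL u' ->
  phi u = phi u' ->
  (~ isolated eL u -> u = u') /\ (isolated eL u -> isolated eL u').
Proof.
move=> [symL irrL] [symG irrG] [[_ hom inj img] _] sub eqp.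
split.
- move=> niso.
  have [v vin] : exists v, v \in nbhd eL u.
    case: (set_0Vmem (nbhd eL u)) => [h|[v hv]]; first by case: niso.
    by exists v.
  have := subsetP sub v vin.
  rewrite /star !inE => /orP [/eqP vu'|uv'].
  + move: vin; rewrite /nbhd inE vu' => e.
    have := hom _ _ e; by rewrite eqp irrG.
  + move: vin; rewrite /nbhd inE => uv.
    apply: (inj v); by rewrite ?inE // symL.
- rewrite /isolated => iso.
  have h := img u'; rewrite -eqp -img iso imset0 in h.
  apply/setP => w; rewrite !inE; apply/negP => w'.
  have : phi w \in phi @: nbhd eL u' by apply: imset_f; rewrite inE.
  by rewrite h inE.
Qed.
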